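(* Let $M_1=(E,r_1)$ and $M_2=(E,r_2)$ be demi-matroids. Then $\mathcal{E}_{M_1}\subseteq\mathcal{E}_{M_2}\iff \mathcal{E}_{M_2^*}\subseteq\mathcal{E}_{M_1^*}\iff \mathcal{E}_{\overline{M_1}}\subseteq\mathcal{E}_{\overline{M_2}}.$
   Context: A demi-matroid is a pair $(E,r)$ with $E$ finite and $r:2^E\to\mathbb{N}$ satisfying $r(\emptyset)=0$ and $r(X)\le r(X\cup\{x\})\le r(X)+1$ for all $X\subseteq E$, $x\in E$. For a demi-matroid $M=(E,r)$: its (first) dual is $M^*=(E,r^* )$ with $r^*(X)=|X|+r(E\setminus X)-r(E)$; its supplement (second) dual is $\overline{M}=(E,\overline{r})$ with $\overline{r}(X)=r(E)-r(E\setminus X)$; both are demi-matroids. Also $\mathcal{E}_M=\{(X,x): X\subseteq E,\ x\in X,\ r(X\setminus\{x\})=r(X)\}$. *)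

(* Defs.v *)
From mathcomp Require Import all_boot.
Set Implicit Arguments.
Unset Strict Implicit.
Unset Printing Implicit Defensive.

(* A demi-matroid on a finite ground set E is given by a rank function
   r : {set E} -> nat (the ground set is the whole finType E). *)
Definition demi_matroid (E : finType) (r : {set E} -> nat) : Prop :=
  r set0 = 0 /\
  forall (X : {set E}) (x : E), r X <= r (x |: X) <= (r X).+1.

(* first dual: r*(X) = |X| + r(E \ X) - r(E)  (nonnegative for demi-matroids) *)
Definition dual_rank (E : finType) (r : {set E} -> nat) : {set E} -> nat :=
  fun X => #|X| + r (~: X) - r setT.

Definition supp_rank (E : finType) (r : {set E} -> nat) : {set E} -> nat :=
  fun X => r setT - r (~: X).

Definition inE_M (E : finType) (r : {set E} -> nat) (X : {set E}) (x : E) : Prop :=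
  x \in X /\ r (X :\ x) = r X.

Definition E_subset (E : finType) (r1 r2 : {set E} -> nat) : Prop :=
  forall (X : {set E}) (x : E), inE_M r1 X x -> inE_M r2 X x.

(* Main.v *)
Require Import Defs.
From mathcomp Require Import all_boot.
From mathcomp Require Import zify.

Section S.
Variables (E : finType) (r : {set E} -> nat).
Hypothesis hr : demi_matroid r.

Lemma bnd n : forall A B : {set E}, A \subset B -> #|B :\: A| = n ->
  r A <= r B <= r A + n.
Proof.
elim: n => [|n IH] A B sAB hc.
  have -> : B = A.
    apply/eqP; rewrite eqEsubset sAB andbT.
    by rewrite -setD_eq0 -cards_eq0 hc.
  by rewrite addn0 leqnn.
have : 0 < #|B :\: A| by rewrite hc.
case/card_gt0P => x xBA.
have xB : x \in B by move: xBA; rewrite inE => /andP[].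
have xA : x \notin A by move: xBA; rewrite inE => /andP[].
have s2 : x |: A \subset B by rewrite subUset sub1set xB sAB.
have c2 : #|B :\: (x |: A)| = n.
  have -> : B :\: (x |: A) = (B :\: A) :\ x.
    by apply/setP => y; rewrite !inE; case: (y == x); rewrite ?andbF ?andbT //= andbC.
  move: (cardsD1 x (B :\: A)); rewrite xBA hc /=; lia.
have := IH _ _ s2 c2. have := (proj2 hr) A x. lia.
Qed.

Lemma r_le_top X : r X <= r setT.
Proof. by have := @bnd _ _ _ (subsetT X) (erefl _); case/andP. Qed.

Lemma r_top X : r setT <= r (~: X) + #|X|.
Proof.
have := @bnd _ _ _ (subsetT (~: X)) (erefl _); case/andP => _.
by rewrite setTD setCK.
Qed.

Lemma compl_D1 (X : {set E}) x : ~: (X :\ x) = x |: ~: X.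
Proof. by apply/setP => y; rewrite !inE negb_and negbK. Qed.

Lemma inE_dual X x : inE_M (dual_rank r) X x <-> x \in X /\ r (x |: ~: X) <> r (~: X).
Proof.
rewrite /inE_M /dual_rank compl_D1.
split => -[xX H]; split => //; move: H.
- have := cardsD1 x X; rewrite xX.
  have := r_top X; have := r_top (X :\ x); rewrite compl_D1.
  have := (proj2 hr) (~: X) x. lia.
- have := cardsD1 x X; rewrite xX.
  have := r_top X; have := r_top (X :\ x); rewrite compl_D1.
  have := (proj2 hr) (~: X) x. lia.
Qed.

Lemma inE_supp X x : inE_M (supp_rank r) X x <-> x \in X /\ r (x |: ~: X) = r (~: X).
Proof.
rewrite /inE_M /supp_rank compl_D1.
split => -[xX H]; split => //; move: H;
have := r_le_top (x |: ~: X); have := (proj2 hr) (~: X) x; lia.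
Qed.
End S.

Theorem mainTheorem6 (E : finType) (r1 r2 : {set E} -> nat) :
  demi_matroid r1 -> demi_matroid r2 ->
  (E_subset r1 r2 <-> E_subset (dual_rank r2) (dual_rank r1)) /\
  (E_subset (dual_rank r2) (dual_rank r1) <->
     E_subset (supp_rank r1) (supp_rank r2)).
Proof.
move=> h1 h2.
have A : E_subset r1 r2 <-> E_subset (supp_rank r1) (supp_rank r2).
  split => H X x.
  - move/(inE_supp _ _ h1) => [xX e]; apply/(inE_supp _ _ h2); split => //.
    have xZ : x \in x |: ~: X by rewrite !inE eqxx.
    have D : (x |: ~: X) :\ x = ~: X.
      by apply/setP => y; rewrite !inE; case: eqP => // ->; rewrite xX.
    have := H _ _ (conj xZ (etrans (f_equal r1 D) (esym e))).
    by case=> _; rewrite D => ->.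
  - case=> xX e.
    have xC : x \in ~: (X :\ x) by rewrite !inE eqxx.
    have Ce : ~: ~: (X :\ x) = X :\ x by rewrite setCK.
    have hX : x |: (X :\ x) = X by rewrite setD1K.
    have := H (~: (X :\ x)) x.
    rewrite (inE_supp _ _ h1) (inE_supp _ _ h2) Ce hX => K.
    by split => //; case: K => //.
have B : E_subset r1 r2 <-> E_subset (dual_rank r2) (dual_rank r1).
  split => H X x.
  - move/(inE_dual _ _ h2) => [xX e]; apply/(inE_dual _ _ h1); split => // e1.
    apply: e.
    have xZ : x \in x |: ~: X by rewrite !inE eqxx.
    have D : (x |: ~: X) :\ x = ~: X.
      by apply/setP => y; rewrite !inE; case: eqP => // ->; rewrite xX.
    have := H _ _ (conj xZ (etrans (f_equal r1 D) (esym e1))).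
    by case=> _; rewrite D => ->.
  - case=> xX e.
    have xC : x \in ~: (X :\ x) by rewrite !inE eqxx.
    have Ce : ~: ~: (X :\ x) = X :\ x by rewrite setCK.
    have hX : x |: (X :\ x) = X by rewrite setD1K.
    split => //.
    case: (eqVneq (r2 (X :\ x)) (r2 X)) => [-> // | ne].
    have := H (~: (X :\ x)) x.
    rewrite (inE_dual _ _ h1) (inE_dual _ _ h2) Ce hX => K.
    have ne' : r2 X <> r2 (X :\ x) by move=> q; move: ne; rewrite q eqxx.
    by have [_ /(_ (esym e))] := K (conj xC ne').
split; first exact: B.
split => H; [apply/A/B | apply/B/A] => //.
Qed.
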